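(* Let $G$ be a finitely generated, residually finite group. For a finitely generated group $H$ let $\operatorname{rk}(H)$ denote the minimal number of elements generating $H$ (every subgroup of finite index in $G$ is finitely generated). Suppose that the function $\varphi = \operatorname{rk} - 1$, defined on the subgroups of finite index in $G$, is multiplicative, i.e. for all subgroups $G_2 \leq G_1 \leq G$ with $G_2$ of finite index in $G$ one has \[ \operatorname{rk}(G_2) - 1 = [G_1 : G_2]\cdot\big(\operatorname{rk}(G_1) - 1\big). \] Then $G$ is a free group.
   Context: The rank $\operatorname{rk}(H)$ of a finitely generated group $H$ is the minimal cardinality of a generating set of $H$. A real-valued function $\varphi$ on the subgroups of finite index of $G$ is called multiplicative if $\varphi(G_2) = [G_1:G_2]\cdot \varphi(G_1)$ for all pairs of subgroups $G_2 \leq G_1$ of $G$ with $G_2$ of finite index in $G$. *)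

(* Defs.v *)
(* Abstract, possibly infinite groups are
   encoded as a carrier type with explicit operations and group axioms. *)
From mathcomp Require Import all_boot all_algebra.
Set Implicit Arguments. Unset Strict Implicit. Unset Printing Implicit Defensive.

Record group_struct (T : Type) := GroupStruct {
  gmul : T -> T -> T;
  gone : T;
  ginv : T -> T;
  gmulA : forall x y z, gmul x (gmul y z) = gmul (gmul x y) z;
  gmul1 : forall x, gmul gone x = x;
  gmulV : forall x, gmul (ginv x) x = gone }.

Section Defs.
Variables (T : Type) (G : group_struct T).

Definition is_subgroup (S : T -> Prop) : Prop :=
  S (gone G) /\ (forall x y, S x -> S y -> S (gmul G x y)) /\
  (forall x, S x -> S (ginv G x)).

Definition is_normal (N : T -> Prop) : Prop :=
  forall x y, N x -> N (gmul G (ginv G y) (gmul G x y)).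

Definition prop_subset (A B : T -> Prop) : Prop := forall x, A x -> B x.

Definition has_index (G1 G2 : T -> Prop) (n : nat) : Prop :=
  exists r : 'I_n -> T, (forall i, G1 (r i)) /\
    forall x, G1 x -> exists! i, G2 (gmul G (ginv G (r i)) x).

Definition finite_index (H : T -> Prop) : Prop :=
  exists n, has_index (fun _ => True) H n.

Definition in_gen (S : T -> Prop) (x : T) : Prop :=
  forall K, is_subgroup K -> prop_subset S K -> K x.

Definition generates (H : T -> Prop) (k : nat) (g : 'I_k -> T) : Prop :=
  (forall i, H (g i)) /\ forall x, H x -> in_gen (fun y => exists i, y = g i) x.

Definition is_rank (H : T -> Prop) (r : nat) : Prop :=
  (exists g : 'I_r -> T, generates H g) /\
  forall k (g : 'I_k -> T), generates H g -> (r <= k)%N.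

Definition fin_generated : Prop :=
  exists k (g : 'I_k -> T), generates (fun _ => True) g.

Definition residually_finite : Prop :=
  forall x, x <> gone G -> exists N, is_subgroup N /\ is_normal N /\
    finite_index N /\ ~ N x.

End Defs.

Definition is_hom (T U : Type) (G : group_struct T) (H : group_struct U)
  (f : T -> U) : Prop := forall x y, f (gmul G x y) = gmul H (f x) (f y).

Definition is_free (T : Type) (G : group_struct T) : Prop :=
  exists X : T -> Prop, forall (U : Type) (H : group_struct U) (f : T -> U),
    exists phi : T -> U, is_hom G H phi /\ (forall x, X x -> phi x = f x) /\
      forall psi : T -> U, is_hom G H psi -> (forall x, X x -> psi x = f x) ->
        forall y, psi y = phi y.

(* Main.v *)
Require Import Defs.
From mathcomp Require Import all_boot all_algebra.
From Stdlib Require Import ClassicalEpsilon Classical Lia.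
From mathcomp Require Import zify.
Set Implicit Arguments. Unset Strict Implicit. Unset Printing Implicit Defensive.

Definition asb (P : Prop) : bool :=
  if excluded_middle_informative P then true else false.
Lemma asbP (P : Prop) : asb P = true <-> P.
Proof. rewrite /asb; case: excluded_middle_informative => //; split => //. Qed.

Lemma min_exists (P : nat -> Prop) : (exists k, P k) ->
  exists k, P k /\ forall m, P m -> k <= m.
Proof.
have H : forall n, (forall k, P k -> n <= k) \/ exists k, P k /\ forall m, P m -> k <= m.
  elim=> [|n [IH|IH]]; [by left | | by right].
  case: (classic (P n)) => Pn; first by right; exists n.
  left => k Pk; have := IH k Pk; rewrite leq_eqVlt => /orP [/eqP E|//].
  by subst.
move=> [k0 Pk0]; case: (H k0.+1) => // /(_ k0 Pk0); by rewrite ltnn.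
Qed.

Section Grp.
Variables (T : Type) (G : group_struct T).
Local Notation "x ** y" := (gmul G x y) (at level 40, left associativity).
Local Notation e := (gone G).
Local Notation iv := (ginv G).

Lemma mulgV x : x ** iv x = e.
Proof.
have h := gmulV G (iv x).
rewrite -[x ** iv x](gmul1 G) -h -!gmulA [iv x ** _]gmulA gmulV gmul1 //.
Qed.
Lemma mulg1 x : x ** e = x.
Proof. by rewrite -(gmulV G x) gmulA mulgV gmul1. Qed.
Lemma mulKg x y : iv x ** (x ** y) = y.
Proof. by rewrite gmulA gmulV gmul1. Qed.
Lemma mulKVg x y : x ** (iv x ** y) = y.
Proof. by rewrite gmulA mulgV gmul1. Qed.
Lemma mulgK x y : (y ** x) ** iv x = y.
Proof. by rewrite -gmulA mulgV mulg1. Qed.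
Lemma mulgKV x y : (y ** iv x) ** x = y.
Proof. by rewrite -gmulA gmulV mulg1. Qed.
Lemma invg_uniq x y : x ** y = e -> x = iv y.
Proof. by move=> h; rewrite -[x]mulg1 -(mulgV y) gmulA h gmul1. Qed.
Lemma invgK x : iv (iv x) = x.
Proof. by symmetry; apply: invg_uniq; rewrite mulgV. Qed.
Lemma invMg x y : iv (x ** y) = iv y ** iv x.
Proof. by symmetry; apply: invg_uniq; rewrite -gmulA mulKg gmulV. Qed.
Lemma inv1 : iv e = e.
Proof. by symmetry; apply: invg_uniq; rewrite gmul1. Qed.
Lemma mul_cancel_r a b c : a ** c = b ** c -> a = b.
Proof. by move=> h; rewrite -(mulgK c a) h mulgK. Qed.
Lemma mul_cancel_l a b c : c ** a = c ** b -> a = b.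
Proof. by move=> h; rewrite -(mulKg c a) h mulKg. Qed.
Lemma mul_idl a b : a ** b = b -> a = e.
Proof. by move=> h; apply: (@mul_cancel_r _ _ b); rewrite gmul1. Qed.

Lemma in_gen_sub S : is_subgroup G (in_gen G S).
Proof.
split; [|split].
- by move=> K [] .
- by move=> x y hx hy K hK hS; case: (hK) => _ [hm _]; apply: hm; [apply: hx|apply: hy].
- by move=> x hx K hK hS; case: (hK) => _ [_ hi]; apply: hi; apply: hx.
Qed.
Lemma in_gen_gen (S : T -> Prop) x : S x -> in_gen G S x.
Proof. by move=> hx K _ hS; apply: hS. Qed.

End Grp.
Section Cosets.
Variables (T : Type) (G : group_struct T).
Local Notation "x ** y" := (gmul G x y) (at level 40, left associativity).
Local Notation e := (gone G).
Local Notation iv := (ginv G).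

Definition classifies (K : T -> Prop) (F : Type) (c : T -> F) :=
  forall x y, c x = c y <-> K (iv x ** y).

Lemma index_classifier K n : is_subgroup G K -> has_index G (fun _ => True) K n ->
  exists c : T -> 'I_n, classifies K c /\ (forall i, exists x, c x = i).
Proof.
move=> [K1 [KM KV]] [r [_ hr]].
have ex x : exists i, K (iv (r i) ** x).
  by case: (hr x I) => i [hi _]; exists i.
pose c x := proj1_sig (constructive_indefinite_description _ (ex x)).
have hc x : K (iv (r (c x)) ** x) by rewrite /c; case: constructive_indefinite_description.
have uc x i : K (iv (r i) ** x) -> i = c x.
  move=> h; case: (hr x I) => j [_ hj]; by rewrite -(hj i h) -(hj _ (hc x)).
exists c; split.
- move=> x y; split.
  + move=> hxy; have := KM _ _ (KV _ (hc x)) (hc y).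
    by rewrite hxy invMg invgK gmulA mulgK.
  + move=> h; apply: uc; have := KM _ _ (hc x) h.
    by rewrite -gmulA mulKVg.
- move=> i; exists (r i); symmetry; apply: uc; by rewrite gmulV.
Qed.

Lemma classifier_index K (F : finType) (c : T -> F) : classifies K c ->
  exists n, has_index G (fun _ => True) K n.
Proof.
move=> hc.
pose P : {set F} := [set i | asb (exists x, c x = i)].
pose pk (i : F) : T := match excluded_middle_informative (exists x, c x = i) with
  | left h => proj1_sig (constructive_indefinite_description _ h)
  | right _ => e end.
have hpk i : i \in P -> c (pk i) = i.
  rewrite inE => /asbP h; rewrite /pk; case: excluded_middle_informative => // h'.
  by case: constructive_indefinite_description.
exists #|P|; exists (fun k => pk (enum_val k)); split => // x _.
have xP : c x \in P by rewrite inE; apply/asbP; exists x.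
exists (enum_rank_in xP (c x)); split.
- by apply/hc; rewrite hpk ?enum_rankK_in // enum_valP.
- move=> k /hc; rewrite hpk ?enum_valP // => h.
  by apply: enum_val_inj; rewrite enum_rankK_in.
Qed.

Lemma sep (rf : residually_finite G) m (f : nat -> T) (P : nat -> Prop) :
  (forall i, i < m -> P i -> f i <> e) ->
  exists (F : finType) (c : T -> F) K, is_subgroup G K /\ classifies K c /\
    forall i, i < m -> P i -> ~ K (f i).
Proof.
elim: m => [|m IH] hf.
  exists (unit : finType), (fun _ => tt), (fun _ => True); split; last split => //.
  by split => //; split.
have [F [c [K [sK [cK hK]]]]] : exists (F : finType) (c : T -> F) K, is_subgroup G K /\
    classifies K c /\ forall i, i < m -> P i -> ~ K (f i).
  by apply: IH => i hi; apply: hf; apply: ltnW.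
case: (classic (P m)) => Pm; last first.
  exists F, c, K; split => //; split => // i; rewrite ltnS leq_eqVlt => /orP [/eqP ->//|].
  exact: hK.
have [N [sN [_ [[n hn] nN]]]] := rf _ (hf m (ltnSn m) Pm).
have [cN [hcN _]] := index_classifier sN hn.
exists ((F * 'I_n)%type : finType), (fun x => (c x, cN x)), (fun x => K x /\ N x).
split; [|split].
- case: sK => [K1 [KM KV]]; case: sN => [N1 [NM NV]].
  split; [|split]; first by [].
  + by move=> x y [? ?] [? ?]; split; [apply: KM|apply: NM].
  + by move=> x [? ?]; split; [apply: KV|apply: NV].
- move=> x y; split.
  + by case=> /cK ? /hcN ?.
  + by case=> /cK -> /hcN ->.
- move=> i; rewrite ltnS leq_eqVlt => /orP [/eqP -> _ [_ //]|hi Pi [Ki _]].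
  exact: (hK i hi Pi Ki).
Qed.

End Cosets.
Section Schreier.
Variables (T : Type) (G : group_struct T).
Local Notation "x ** y" := (gmul G x y) (at level 40, left associativity).
Local Notation e := (gone G).
Local Notation iv := (ginv G).

Lemma gen_remove (I : finType) (s : I -> T) (S : {set I}) (H : T -> Prop) :
  (forall i, H (s i)) -> (forall x, H x -> in_gen G (fun y => exists i, y = s i) x) ->
  (forall i, i \in S -> s i = e) ->
  generates G H (fun j : 'I_#|~: S| => s (enum_val j)).
Proof.
move=> hH hgen hS; split => // x /hgen hx M sM hsub; apply: hx => //.
move=> y [i ->]; case: (boolP (i \in S)) => iS.
  by rewrite hS //; case: sM.
have iC : i \in ~: S by rewrite inE.
apply: hsub; exists (enum_rank_in iC i); by rewrite enum_rankK_in.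
Qed.

Variables (K : T -> Prop) (n : nat) (c : T -> 'I_n).
Hypotheses (sK : is_subgroup G K) (hc : classifies G K c) (csurj : forall i, exists x, c x = i).
Variables (d : nat) (g : 'I_d -> T).
Hypothesis hg : forall x, in_gen G (fun y => exists i, y = g i) x.

Lemma c_mull y a b : c a = c b -> c (y ** a) = c (y ** b).
Proof. by move=> /hc h; apply/hc; rewrite invMg -gmulA mulKg. Qed.

Variable t : 'I_n -> T.
Hypotheses (ct : forall i, c (t i) = i) (te : t (c e) = e).

Definition sfam (p : 'I_n * 'I_d) := iv (t (c (g p.2 ** t p.1))) ** (g p.2 ** t p.1).

Lemma sfamK p : K (sfam p).
Proof. by apply/hc; rewrite ct. Qed.

Lemma schreier x : K x -> in_gen G (fun y => exists p, y = sfam p) x.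
Proof.
move=> Kx.
have sS := in_gen_sub G (fun y => exists p, y = sfam p).
set S := in_gen G _ in sS *.
case: (sS) => S1 [SM SV].
pose P y := forall i, S (iv (t (c (y ** t i))) ** (y ** t i)).
have sP : is_subgroup G P.
  split; [|split].
  - by move=> i; rewrite gmul1 ct gmulV.
  - move=> y z Py Pz i.
    set j := c (z ** t i).
    have E1 : c (y ** z ** t i) = c (y ** t j).
      by rewrite -gmulA; apply: c_mull; rewrite ct.
    have := SM _ _ (Py j) (Pz i).
    by rewrite E1 -!gmulA mulKVg.
  - move=> y Py i.
    set j := c (iv y ** t i).
    have E1 : c (y ** t j) = i.
      by rewrite -[RHS]ct -[t i](mulKVg G y) ; apply: c_mull; rewrite ct.
    have := SV _ (Py j); rewrite E1 invMg invgK invMg -!gmulA.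
    by [].
have : P x.
  apply: (hg x) => // y [a ->] i.
  apply: in_gen_gen; by exists (i, a).
move/(_ (c e)); rewrite te mulg1.
have -> : c x = c e by apply/hc; rewrite mulg1; case: sK => _ [_ ]; apply.
by rewrite te inv1 gmul1.
Qed.

End Schreier.
Definition gen (T : Type) (G : group_struct T) (b : bool) (x : T) :=
  if b then x else ginv G x.

Section Tree.
Variables (T : Type) (G : group_struct T).
Local Notation "x ** y" := (gmul G x y) (at level 40, left associativity).
Local Notation e := (gone G).
Local Notation iv := (ginv G).
Variables (K : T -> Prop) (n : nat) (c : T -> 'I_n).
Hypotheses (sK : is_subgroup G K) (hc : classifies G K c) (csurj : forall i, exists x, c x = i).
Variables (d : nat) (g : 'I_d -> T).
Hypothesis hg : forall x, in_gen G (fun y => exists i, y = g i) x.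

Definition Inv (R : {set 'I_n}) (t : 'I_n -> T) (E : {set 'I_n * 'I_d}) :=
 [/\ forall i, i \in R -> c (t i) = i, c e \in R, t (c e) = e,
   forall p, p \in E -> [/\ p.1 \in R, c (g p.2 ** t p.1) \in R &
                          t (c (g p.2 ** t p.1)) = g p.2 ** t p.1]
   & #|R| <= #|E| ].

Lemma extend R t E : Inv R t E -> (exists j, j \notin R) ->
  exists R' t' E', Inv R' t' E' /\ #|R| < #|R'|.
Proof.
move=> [ct ceR te hE hcard] [j0 j0R].
have [i [a [b [iR jR]]]] : exists i a b, i \in R /\ c (gen G b (g a) ** t i) \notin R.
  apply: NNPP => hn.
  have H : forall i a b, i \in R -> c (gen G b (g a) ** t i) \in R.
    move=> i a b iR; apply/negPn/negP => hj; apply: hn; by exists i, a, b.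
  pose P y := forall z, (c z \in R) = (c (y ** z) \in R).
  have sP : is_subgroup G P.
    split; [|split].
    - by move=> z; rewrite gmul1.
    - by move=> y z Py Pz w; rewrite Pz Py gmulA.
    - by move=> y Py z; rewrite (Py (iv y ** z)) mulKVg.
  have [x hx] := csurj j0.
  have : P x.
    apply: (hg x) => // y [a ->] z; apply/idP/idP => h.
    - have := H (c z) a true h; rewrite /gen.
      by rewrite (@c_mull _ _ K n c hc _ _ z) // ct.
    - have := H (c (g a ** z)) a false h; rewrite /gen.
      by rewrite (@c_mull _ _ K n c hc _ _ (g a ** z)) ?ct // mulKg.
  move/(_ e); rewrite mulg1 ceR hx => /esym h; by rewrite h in j0R.
set y := gen G b (g a) ** t i in jR.
set j := c y in jR.
pose t' k := if k == j then y else t k.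
pose p := if b then (i, a) else (j, a).
have ij : i != j by apply/eqP => ij; move: jR; rewrite -ij iR.
have t'R k : k \in R -> t' k = t k.
  by move=> kR; rewrite /t'; case: eqP => // kj; move: jR; rewrite -kj kR.
exists (j |: R), t', (p |: E); split; last by rewrite cardsU1 jR.
split.
- move=> k; rewrite in_setU1 => /orP [/eqP ->|kR].
    by rewrite /t' eqxx.
  by rewrite t'R // ct.
- by rewrite in_setU1 ceR orbT.
- by rewrite t'R.
- move=> q; rewrite in_setU1 => /orP [/eqP ->|qE].
    rewrite /p; case hb: b => /=.
    + have hy : g a ** t i = y by rewrite /y /gen hb.
      rewrite t'R // in_setU1 iR orbT hy -/j; split => //.
      * by rewrite in_setU1 eqxx.
      * by rewrite /t' eqxx.
    + have hy : g a ** t' j = t i.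
        by rewrite /t' eqxx /y /gen hb mulKVg.
      rewrite hy ct //; split; [by rewrite in_setU1 eqxx | by rewrite in_setU1 iR orbT | by rewrite t'R].
  have [q1 q2 q3] := hE q qE.
  have q2' : c (g q.2 ** t' q.1) = c (g q.2 ** t q.1) by rewrite t'R.
  rewrite q2' !in_setU1 q1 q2 !orbT t'R // t'R //.
- have pE : p \notin E.
    apply/negP => pE; have [p1 p2 _] := hE p pE; move: p1 p2.
    rewrite /p; case hb: b => /=.
    + have hy : g a ** t i = y by rewrite /y /gen hb.
      move=> _; rewrite hy -/j => jR'.
      by move: jR; rewrite jR'.
    + by move=> jR'; move: jR; rewrite jR'.
  by rewrite !cardsU1 jR pE /= leq_add2l.
Qed.

Lemma final R t E : Inv R t E -> exists t' E', Inv setT t' E'.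
Proof.
move: {2}(n - #|R|) (leqnn (n - #|R|)) => m.
elim: m R t E => [|m IH] R t E hm hI.
- have eR : R = setT.
    apply/eqP; rewrite eqEcard subsetT cardsT card_ord.
    by move: hm; rewrite leqn0 subn_eq0.
  rewrite eR in hI; by exists t, E.
- case: (classic (exists j, j \notin R)) => [hj|hn].
  + have [R' [t' [E' [hI' hlt]]]] := extend hI hj.
    apply: (IH R' t' E') => //.
    have : #|R'| <= n by have := max_card (mem R'); rewrite card_ord.
    move=> hR'; move: hm hlt hR'; clear; lia.
  + have eR : R = setT.
      apply/setP => k; rewrite inE; apply/negPn/negP => kR; apply: hn; by exists k.
    rewrite eR in hI; by exists t, E.
Qed.

End Tree.
Section Words.
Variable d : nat.
Definition letter := ('I_d * bool)%type.

Definition weval (U : Type) (H : group_struct U) (h : 'I_d -> U) (w : seq letter) : U :=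
  foldr (fun x acc => gmul H (gen H x.2 (h x.1)) acc) (gone H) w.

Definition cancels (x y : letter) := (x.1 == y.1) && (x.2 != y.2).

Fixpoint reduced (w : seq letter) : bool :=
  match w with
  | x :: ((y :: _) as w') => ~~ cancels x y && reduced w'
  | _ => true end.

Definition winv (w : seq letter) : seq letter := rev (map (fun x => (x.1, ~~ x.2)) w).

Lemma weval_cat U (H : group_struct U) h u v :
  weval H h (u ++ v) = gmul H (weval H h u) (weval H h v).
Proof. elim: u => [|x u IH] /=; first by rewrite gmul1. by rewrite IH gmulA. Qed.

Lemma weval_cancel U (H : group_struct U) h x y : cancels x y ->
  gmul H (gen H x.2 (h x.1)) (gen H y.2 (h y.1)) = gone H.
Proof.
case: x y => [a b] [a' b'] /andP [/= /eqP <-]; rewrite /gen.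
by case: b; case: b' => //= _; [rewrite mulgV | rewrite gmulV].
Qed.

Lemma weval_winv U (H : group_struct U) h w :
  weval H h (winv w) = ginv H (weval H h w).
Proof.
elim: w => [|x w IH] /=; first by rewrite inv1.
rewrite /winv /= rev_cons -cats1 weval_cat -/(winv w) IH /= mulg1 invMg /gen.
by case: (x.2) => //=; rewrite invgK.
Qed.

Lemma reduced_cat u v : reduced (u ++ v) -> reduced u /\ reduced v.
Proof.
elim: u => [|x u IH] //=.
case: u IH => [|y u] IH /=.
- by clear IH; case: v => [|z v] //= /andP [_ ->].
- move=> /andP [h1 h]; have [h2 h3] := IH h; split => //.
  by rewrite h1; move: h2.
Qed.

Lemma reduced_nth x0 w m : reduced w -> m.+1 < size w ->
  ~~ cancels (nth x0 w m) (nth x0 w m.+1).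
Proof.
elim: w m => [|x w IH] m //=.
case: w IH => [|y w] IH //= /andP [hxy hr].
case: m => [|m] //= hm.
by apply: (IH m hr).
Qed.

Lemma not_reduced w : ~~ reduced w ->
  exists u x y v, w = u ++ x :: y :: v /\ cancels x y.
Proof.
elim: w => [|x w IH] //=.
case: w IH => [|y w] IH //=.
rewrite negb_and negbK => /orP [hxy|hr].
- by exists [::], x, y, w.
- have [u [x' [y' [v [E hc]]]]] := IH hr.
  by exists (x :: u), x', y', v; rewrite E.
Qed.

End Words.
Section Core.
Variables (T : Type) (G : group_struct T).
Local Notation "x ** y" := (gmul G x y) (at level 40, left associativity).
Local Notation e := (gone G).
Local Notation iv := (ginv G).
Variables (d : nat) (g : 'I_d -> T).
Hypothesis hg : forall x, in_gen G (fun y => exists i, y = g i) x.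
Hypothesis rf : residually_finite G.
Hypothesis mult : forall K n r2, is_subgroup G K -> has_index G (fun _ => True) K n ->
  is_rank G K r2 -> ((r2%:Z - 1) = n%:Z * (d%:Z - 1))%R.

Lemma core_main (w : seq (letter d)) (x0 : letter d) : w != [::] -> reduced w ->
  weval G g w = e ->
  (forall j k, j < k -> k < size w -> weval G g (drop j w) <> weval G g (drop k w)) ->
  False.
Proof.
move=> wn red we dist.
set L := size w.
have L0 : 0 < L by rewrite lt0n size_eq0.
pose p k := weval G g (drop k w).
have p0 : p 0 = e by rewrite /p drop0.
have pL : p L = e by rewrite /p drop_size.
have pstep m : m < L -> p m = gen G (nth x0 w m).2 (g (nth x0 w m).1) ** p m.+1.
  by move=> hm; rewrite /p (drop_nth x0 hm).
have hsep : forall i, i < L * L -> i %/ L < i %% L ->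
    iv (p (i %/ L)) ** p (i %% L) <> e.
  move=> i _ hi he; apply: (dist _ _ hi (ltn_pmod i L0)).
  by have := mulKVg G (p (i %/ L)) (p (i %% L)); rewrite he mulg1.
have [F [cF [K [sK [cK hK]]]]] := sep rf hsep.
have [n hn] := classifier_index cK.
have [c [hc csurj]] := index_classifier sK hn.
have sepK j k : j < k -> k < L -> ~ K (iv (p j) ** p k).
  move=> hjk hk; have hj : j < L by apply: ltn_trans hk.
  have := hK (j * L + k); rewrite divnMDl // divn_small // addn0.
  rewrite -modnDm modnMl add0n modn_mod (modn_small hk); apply => //.
  nia.
have cdist j k : j < L -> k < L -> c (p j) = c (p k) -> j = k.
  move=> hj hk h; case: (ltngtP j k) => // hjk; exfalso.
  - by apply: (sepK j k hjk hk); apply/hc.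
  - by apply: (sepK k j hjk hj); apply/hc.
have cpL : c (p L) = c (p 0) by rewrite pL p0.
have cdistL j k : j <= L -> k <= L -> c (p j) = c (p k) ->
    j = k \/ (j = 0 /\ k = L) \/ (j = L /\ k = 0).
  move=> hj hk h.
  case: (eqVneq j L) => [ej|nj]; case: (eqVneq k L) => [ek|nk].
  - by left; rewrite ej ek.
  - subst j; rewrite cpL in h; have := cdist 0 k L0 _ h.
    by move=> /(_ _) ->; [right; right | rewrite ltn_neqAle nk].
  - subst k; rewrite cpL in h; have := cdist j 0 _ L0 h.
    by move=> /(_ _) ->; [right; left | rewrite ltn_neqAle nj].
  - by left; apply: cdist => //; rewrite ltn_neqAle ?nj ?nk.
pose R0 : {set 'I_n} := [set c (p k) | k : 'I_L].
pose t0 (i : 'I_n) : T := if [pick k : 'I_L | c (p k) == i] is Some k then p k else e.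
pose edge (k : 'I_L) : 'I_n * 'I_d :=
  let x := nth x0 w k in if x.2 then (c (p k.+1), x.1) else (c (p k), x.1).
pose E0 : {set 'I_n * 'I_d} := [set edge k | k : 'I_L].
have cR k : k <= L -> c (p k) \in R0.
  rewrite leq_eqVlt => /orP [/eqP ->|hk].
    by rewrite cpL; apply/imsetP; exists (Ordinal L0).
  by apply/imsetP; exists (Ordinal hk).
have tp' k : k < L -> t0 (c (p k)) = p k.
  move=> hk; rewrite /t0; case: pickP => [k' /eqP h|hn'].
  - by rewrite (cdist _ _ (ltn_ord k') hk h).
  - by have := hn' (Ordinal hk); rewrite eqxx.
have tp k : k <= L -> t0 (c (p k)) = p k.
  rewrite leq_eqVlt => /orP [/eqP ->|/tp' //].
  by rewrite cpL tp' // p0 pL.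
have tf (k1 k2 : 'I_L) : (nth x0 w k1).2 = true -> (nth x0 w k2).2 = false ->
    (nth x0 w k1).1 = (nth x0 w k2).1 -> c (p k1.+1) = c (p k2) -> False.
  move=> h1 h2 ha hc12.
  have := cdistL k1.+1 k2 (ltn_ord k1) (ltnW (ltn_ord k2)) hc12.
  case => [e12|[[//]|[e1 e2]]].
  - have hk : k1.+1 < L by rewrite e12.
    have := reduced_nth x0 red hk; rewrite e12 /cancels ha h1 h2 eqxx //.
  - set a := (nth x0 w k1).1 in ha.
    have pk1 : p k1 = g a by rewrite (pstep k1 (ltn_ord k1)) e1 pL h1 /gen mulg1.
    have e2' : nth x0 w k2 = nth x0 w 0 by rewrite e2.
    have p1 : p 1 = g a.
      have := pstep 0 L0; rewrite p0 -e2' h2 -ha /gen => h.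
      by rewrite -(mulKVg G (g a) (p 1)) -h mulg1.
    case: (ltngtP 1 L) => hL1.
    + have := cdist 1 k1 hL1 (ltn_ord k1); rewrite p1 pk1 => /(_ erefl) k11.
      have := reduced_nth x0 red hL1.
      have -> : nth x0 w 1 = nth x0 w k1 by rewrite -k11.
      by rewrite -e2' /cancels -ha h1 h2 eqxx.
    + by move: hL1; rewrite ltnS leqn0 => /eqP hL; rewrite hL in L0.
    + have k10 : nat_of_ord k1 = 0 by move: e1 hL1; clear; lia.
      have : nth x0 w k1 = nth x0 w k2 by rewrite k10 e2.
      by move=> h; move: h1; rewrite h h2.
have einj : injective edge.
  move=> k1 k2; rewrite /edge /=.
  case h1: (nth x0 w k1).2; case h2: (nth x0 w k2).2; case => hc12 ha.
  - have := cdistL k1.+1 k2.+1 (ltn_ord k1) (ltn_ord k2) hc12.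
    by case => [[e]|[[//]|[//]]]; apply: val_inj.
  - by exfalso; apply: (tf k1 k2 h1 h2 ha hc12).
  - by exfalso; apply: (tf k2 k1 h2 h1 (esym ha) (esym hc12)).
  - by apply: val_inj; apply: (cdist _ _ (ltn_ord k1) (ltn_ord k2) hc12).
have hI : Inv G c g R0 t0 E0.
  split.
  - by move=> i /imsetP [k _ ->]; rewrite tp'.
  - by rewrite -p0; apply: cR.
  - by rewrite -p0 tp'.
  - move=> q /imsetP [k _ ->]; rewrite /edge /=; case h: (nth x0 w k).2 => /=.
    + have hk : g (nth x0 w k).1 ** p k.+1 = p k by rewrite (pstep k (ltn_ord k)) h.
      rewrite tp // hk; split; [exact: cR | exact: cR (ltnW (ltn_ord k)) | exact: tp' ].
    + have hk : g (nth x0 w k).1 ** p k = p k.+1.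
        by rewrite (pstep k (ltn_ord k)) h /gen mulKVg.
      rewrite tp' // hk; split; [exact: cR (ltnW (ltn_ord k)) | exact: cR | exact: tp].
  - by rewrite (card_imset _ einj) leq_imset_card.
have [t [E [ct _ te hE hcard]]] := final hc csurj hg hI.
have ct' i : c (t i) = i := ct i (in_setT i).
have hcardE : n <= #|E| by move: hcard; rewrite cardsT card_ord.
have triv q : q \in E -> sfam G c g t q = e.
  by move=> /hE [_ _ h3]; rewrite /sfam h3 gmulV.
have gK := gen_remove (G:=G) (s := sfam G c g t) (S:=E) (H:=K) (sfamK hc g ct')
  (fun x Kx => schreier sK hc hg ct' te Kx) triv.
have [r2 [Pr2 minr2]] := min_exists (ex_intro (fun k => exists g' : 'I_k -> T, generates G K g') _ (ex_intro _ _ gK)).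
have rk : is_rank G K r2.
  by split => // k g' h; apply: minr2; exists g'.
have hr2 : r2 <= #|~: E| by apply: minr2; exists (fun j : 'I_#|~: E| => sfam G c g t (enum_val j)).
have hm := mult sK hn rk.
have hC := cardsC E; rewrite card_prod !card_ord in hC.
have d0 : 0 < d by have := ltn_ord x0.1; apply: leq_ltn_trans.
move: hm hC hr2 hcardE d0; clear.
move: #|E| #|~: E| => a b; nia.
Qed.

End Core.
Section NoRel.
Variables (T : Type) (G : group_struct T).
Local Notation "x ** y" := (gmul G x y) (at level 40, left associativity).
Local Notation e := (gone G).
Local Notation iv := (ginv G).
Variables (d : nat) (g : 'I_d -> T).
Hypothesis hg : forall x, in_gen G (fun y => exists i, y = g i) x.
Hypothesis rf : residually_finite G.
Hypothesis mult : forall K n r2, is_subgroup G K -> has_index G (fun _ => True) K n ->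
  is_rank G K r2 -> ((r2%:Z - 1) = n%:Z * (d%:Z - 1))%R.

Lemma no_rel (w : seq (letter d)) : w != [::] -> reduced w -> weval G g w <> e.
Proof.
move: {2}(size w) (leqnn (size w)) => N; elim: N w => [|N IH] w hN wn red we.
  by move: wn hN; rewrite leqn0 size_eq0 => /negP.
case: w hN wn red we => [//|x0 w'] hN wn red we.
set w := x0 :: w' in hN wn red we.
apply: (core_main hg rf mult x0 wn red we) => j k hjk hk hp.
set u := take (k - j) (drop j w).
have hd : drop j w = u ++ drop k w.
  by rewrite -{1}(cat_take_drop (k - j) (drop j w)) drop_drop subnK // ltnW.
have ue : weval G g u = e.
  by move: hp; rewrite hd weval_cat; apply: mul_idl.
have ur : reduced u.
  have : reduced (take j w ++ drop j w) by rewrite cat_take_drop.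
  by case/reduced_cat => _; rewrite hd; case/reduced_cat.
have su : size u = k - j.
  by rewrite size_takel // size_drop leq_sub2r // ltnW.
apply: (IH u) => //.
- rewrite su; move: hN hk hjk; clear; lia.
- by rewrite -size_eq0 su; move: hjk; clear; lia.
Qed.

End NoRel.

Lemma weval_del d U (H : group_struct U) (h : 'I_d -> U) u x y v : cancels x y ->
  weval H h (u ++ x :: y :: v) = weval H h (u ++ v).
Proof. move=> hc; rewrite !weval_cat /=; congr (gmul H _ _); by rewrite gmulA weval_cancel // gmul1. Qed.

Section Free.
Variables (T : Type) (G : group_struct T).
Local Notation "x ** y" := (gmul G x y) (at level 40, left associativity).
Local Notation e := (gone G).
Local Notation iv := (ginv G).
Variables (d : nat) (g : 'I_d -> T).
Hypothesis hg : forall x, in_gen G (fun y => exists i, y = g i) x.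
Hypothesis norel : forall w : seq (letter d), w != [::] -> reduced w -> weval G g w <> e.

Lemma rel1 U (H : group_struct U) h w : weval G g w = e -> weval H h w = gone H.
Proof.
move: {2}(size w) (leqnn (size w)) => N; elim: N w => [|N IH] w hN we.
  by move: hN; rewrite leqn0 size_eq0 => /eqP ->.
case: (boolP (reduced w)) => r.
  case: (eqVneq w [::]) => [-> //|wn]; by exfalso; apply: (norel wn r we).
have [u [x [y [v [E hc]]]]] := not_reduced r.
rewrite E weval_del //; apply: IH.
  by move: hN; rewrite E !size_cat /=; clear; lia.
by rewrite -(@weval_del _ _ G g u x y v hc) -E.
Qed.

Lemma word_exists x : exists w, weval G g w = x.
Proof.
refine (@hg x (fun x => exists w : seq (letter d), weval G g w = x) _ _).
- split; [|split].
  + by exists [::].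
  + by move=> a b [u <-] [v <-]; exists (u ++ v); rewrite weval_cat.
  + by move=> a [u <-]; exists (winv u); rewrite weval_winv.
- by move=> y [i ->]; exists [:: (i, true)]; rewrite /= mulg1.
Qed.

Lemma free_of : is_free G.
Proof.
exists (fun x => exists i, x = g i) => U H f.
pose h i := f (g i).
have [wo hwo] : exists wo : T -> seq (letter d), forall x, weval G g (wo x) = x.
  exists (fun x => proj1_sig (constructive_indefinite_description _ (word_exists x))).
  by move=> x; case: constructive_indefinite_description.
have key u v : weval G g u = weval G g v -> weval H h u = weval H h v.
  move=> huv; have h1 : weval H h (u ++ winv v) = gone H.
    by apply: rel1; rewrite weval_cat weval_winv huv mulgV.
  move: h1; rewrite weval_cat weval_winv => h1.
  by rewrite (invg_uniq h1) invgK.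
exists (fun x => weval H h (wo x)); split; [|split].
- move=> x y; rewrite -weval_cat; apply: key.
  by rewrite weval_cat !hwo.
- move=> x [i ->]; have := key (wo (g i)) [:: (i, true)].
  by rewrite hwo /= mulg1 => /(_ erefl) ->; rewrite mulg1.
- move=> psi hpsi hX y.
  have p1 : psi e = gone H.
    by apply: (@mul_idl _ H _ (psi e)); rewrite -hpsi gmul1.
  have pv x : psi (iv x) = ginv H (psi x).
    by apply: invg_uniq; rewrite -hpsi gmulV.
  have pw w : psi (weval G g w) = weval H h w.
    elim: w => [|[a b] w IH] //=; rewrite hpsi IH /gen.
    by case: b; rewrite ?pv hX //; exists a.
  by rewrite -pw hwo.
Qed.

End Free.

Import GRing.Theory.

Theorem theorem1 (T : Type) (G : group_struct T) :
  fin_generated G -> residually_finite G ->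
  (forall (G1 G2 : T -> Prop), is_subgroup G G1 -> is_subgroup G G2 ->
     prop_subset G2 G1 -> finite_index G G2 ->
     forall (n r1 r2 : nat), has_index G G1 G2 n ->
       is_rank G G1 r1 -> is_rank G G2 r2 ->
       ((r2%:Z - 1) = n%:Z * (r1%:Z - 1))%R) ->
  is_free G.
Proof.
move=> [k [g0 hg0]] rf mult.
have [d [[g hgen] hmin]] := min_exists
  (ex_intro (fun k => exists g : 'I_k -> T, generates G (fun _ => True) g) k (ex_intro _ g0 hg0)).
have hg x : in_gen G (fun y => exists i, y = g i) x by apply: hgen.2.
have rk : is_rank G (fun _ => True) d.
  by split; [exists g | move=> k' g' h; apply: hmin; exists g'].
have wsub : is_subgroup G (fun _ => True) by split => //; split.
apply: (free_of hg).
apply: (no_rel hg rf).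
move=> K n r2 sK hn rK.
apply: (mult _ K wsub sK (fun _ _ => I) (ex_intro _ n hn) n d r2 hn rk rK).
Qed.
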